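(* Let $(X,\|\cdot\|)$ be a Banach space, $K\subset X$ a cone, $U$ a relatively open subset of $K$, and $T:\overline{U}\to K$ an operator (not necessarily continuous). Let $\mathbb{T}:\overline{U}\to 2^K$ be the closed--convex envelope of $T$. Then: 1. If $T$ maps bounded sets into relatively compact sets, then $\mathbb{T}$ has compact values and is upper semicontinuous. 2. If $T(\overline{U})$ is relatively compact, then $\mathbb{T}(\overline{U})=\bigcup_{x\in\overline U}\mathbb T x$ is relatively compact.
   Context: A cone in a Banach space $X$ is a closed convex set $K$ such that $\lambda x\in K$ for all $x\in K$, $\lambda\ge 0$, and such that $x\in K$, $-x\in K$ imply $x=0$. The closed--convex envelope of $T:\overline{U}\to K$ is the multivalued map $\mathbb{T}:\overline U\to 2^K$ given by $\mathbb{T}x=\bigcap_{\varepsilon>0}\overline{\mathrm{co}}\,T\big(\overline{B}_\varepsilon(x)\cap\overline{U}\big)$, where $\overline B_\varepsilon(x)$ is the closed ball of center $x$ and radius $\varepsilon$ and $\overline{\mathrm{co}}$ denotes the closed convex hull. *)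

(* Defs.v *)
From HB Require Import structures.
From mathcomp Require Import all_boot all_order all_algebra.
From mathcomp Require Import all_classical all_reals all_analysis.
Set Implicit Arguments. Unset Strict Implicit. Unset Printing Implicit Defensive.
Import Order.TTheory GRing.Theory Num.Theory.
Import numFieldNormedType.Exports.
Local Open Scope classical_set_scope.
Local Open Scope ring_scope.

Section Defs.
Context {R : realType} {X : normedModType R}.

Definition convex_subset (A : set X) : Prop :=
  forall x y (t : R), A x -> A y -> 0 <= t -> t <= 1 -> A (t *: x + (1 - t) *: y).

Definition is_cone (K : set X) : Prop :=
  [/\ closed K, convex_subset K,
      (forall x (l : R), K x -> 0 <= l -> K (l *: x))
    & (forall x, K x -> K (- x) -> x = 0)].

Definition rel_open_in (K U : set X) : Prop :=
  exists O : set X, open O /\ U = O `&` K.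

Definition cball (x : X) (e : R) : set X := [set y | `|y - x| <= e].

Definition clconv (A : set X) : set X :=
  [set z | forall C : set X, closed C -> convex_subset C -> A `<=` C -> C z].

Definition envelope (U : set X) (T : X -> X) (x : X) : set X :=
  [set z | forall e : R, 0 < e -> clconv (T @` (cball x e `&` closure U)) z].

Definition bounded_subset (A : set X) : Prop :=
  exists M : R, forall x, A x -> `|x| <= M.

Definition rel_compact (A : set X) : Prop := compact (closure A).

Definition usc_on (D : set X) (F : X -> set X) : Prop :=
  forall x, D x -> forall V : set X, open V -> F x `<=` V ->
    exists2 d : R, 0 < d & forall y, D y -> `|y - x| < d -> F y `<=` V.

End Defs.

(* Main.v *)
Require Import Defs.
From HB Require Import structures.
From mathcomp Require Import all_boot all_order all_algebra.
From mathcomp Require Import all_classical all_reals all_analysis.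
From mathcomp Require Import ring lra.
Import Order.TTheory GRing.Theory Num.Theory.
Import numFieldNormedType.Exports.
Local Open Scope classical_set_scope.
Local Open Scope ring_scope.
Section Aux.
Context {R : realType} {X : completeNormedModType R}.

Lemma ballN (x y : X) (e : R) : ball x e y <-> `|x - y| < e.
Proof. by rewrite -ball_normE. Qed.

Lemma ultra_fin (F : set_system X) (FU : UltraFilter F) (s : seq X)
  (P : X -> set X) :
  F (fun z => exists2 c, c \in s & P c z) -> exists2 c, c \in s & F (P c).
Proof.
elim: s => [|a s IH] H.
  by have /filter_ex [z [c]] := H; rewrite in_nil.
case: (in_ultra_setVsetC (P a) FU) => [Fa|Fna].
  by exists a => //; rewrite mem_head.
have [c cs Fc] : exists2 c, c \in s & F (P c).
  apply: IH; apply: filterS (filterI H Fna) => z [[c]].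
  rewrite in_cons => /orP [/eqP -> //|cs Pz _]; by exists c.
by exists c => //; rewrite in_cons cs orbT.
Qed.

Lemma tb_compact (W : set X) : closed W ->
  (forall e, 0 < e -> exists s : seq X,
     forall z, W z -> exists2 c, c \in s & ball c e z) -> compact W.
Proof.
move=> cW tb; rewrite compact_ultra => F FU FW.
have cF : cauchy F.
  apply: cauchy_exP => e e0; have [s hs] := tb e e0.
  have : F (fun z => exists2 c, c \in s & ball c e z).
    by apply: filterS FW => z /hs.
  by case/(@ultra_fin F FU) => c _ Fc; exists c.
have /cvg_ex [l Fl] : cvg F by apply/cauchy_cvgP.
exists l; split => //.
exact: (@closed_cvg _ _ F _ id W cW FW l Fl).
Qed.

End Aux.
Section Aux2.
Context {R : realType} {X : completeNormedModType R}.
Implicit Types A B C : set X.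

Lemma clconv_sub A C : A `<=` C -> closed C -> convex_subset C ->
  clconv A `<=` C.
Proof. by move=> AC cC vC z /(_ C cC vC AC). Qed.

Lemma sub_clconv A : A `<=` clconv A.
Proof. by move=> z Az C _ _ /(_ z Az). Qed.

Lemma clconv_mono A B : A `<=` B -> clconv A `<=` clconv B.
Proof. by move=> AB z Hz C cC vC BC; apply: Hz => // w /AB /BC. Qed.

Lemma clconv_closed A : closed (clconv A).
Proof.
move=> z Hz C cC vC AC; apply: (cC).
exact: (closureS (clconv_sub _ _ AC cC vC) Hz).
Qed.

Lemma clconv_convex A : convex_subset (clconv A).
Proof.
move=> x y t Hx Hy t0 t1 C cC vC AC.
by apply: (vC) => //; [apply: Hx|apply: Hy].
Qed.

Definition hull (s : seq X) : set X := [set z | exists t : nat -> R,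
  [/\ (forall i, 0 <= t i), (forall i, t i <= 1),
      \sum_(i < size s) t i <= 1 & z = \sum_(i < size s) t i *: s`_i]].

Lemma hull_convex s : convex_subset (hull s).
Proof.
move=> x y a [t1 [t10 t11 S1 ->]] [t2 [t20 t21 S2 ->]] a0 a1.
exists (fun i => a * t1 i + (1 - a) * t2 i); split.
- move=> i; have := t10 i; have := t20 i; nra.
- move=> i; have := t11 i; have := t21 i; nra.
- rewrite big_split /= -!mulr_sumr; nra.
- rewrite !scaler_sumr [RHS](eq_bigr (fun i : 'I_(size s) =>
    a *: (t1 i *: s`_i) + (1-a) *: (t2 i *: s`_i))) ?big_split // => i _.
  by rewrite scalerDl !scalerA.
Qed.

Lemma hull_mem s c : c \in s -> hull s c.
Proof.
move=> cs; set j := index c s.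
have js : (j < size s)%N by rewrite index_mem.
exists (fun i => (i == j)%:R); split.
- by move=> i; case: (i == j).
- by move=> i; case: (i == j).
- rewrite (bigD1 (Ordinal js)) //= eqxx big1 ?addr0 // => i /negbTE.
  by rewrite -val_eqE /= => ->.
- rewrite (bigD1 (Ordinal js)) //= eqxx scale1r big1 ?addr0 ?nth_index //.
  by move=> i /negbTE; rewrite -val_eqE /= => ->; rewrite scale0r.
Qed.

End Aux2.
Section Aux3.
Context {R : realType} {X : completeNormedModType R}.

Lemma hull_tb (s : seq X) (e : R) : 0 < e -> exists g : seq X,
  forall z, hull s z -> exists2 c, c \in g & `|z - c| < e.
Proof.
move=> e0.
set n := size s; set M := \sum_(i < n) `|s`_i|.
have M0 : 0 <= M by apply: sumr_ge0 => i _.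
set N := (Num.truncn (M / e)).+1.
have N0 : 0 < N%:R :> R by rewrite ltr0n.
have NMe : M / N%:R < e.
  have := truncnS_gt (M / e); rewrite -/N => h.
  rewrite ltr_pdivrMr // mulrC -ltr_pdivrMr //.
pose G := fun f : {ffun 'I_n -> 'I_N.+1} =>
  \sum_(i < n) ((f i)%:R / N%:R) *: s`_i.
exists (map G (enum {ffun 'I_n -> 'I_N.+1})).
move=> z [t [t0 t1 _ ->]].
pose f : {ffun 'I_n -> 'I_N.+1} := [ffun i : 'I_n => inord (Num.truncn (t i * N%:R))].
exists (G f); first by apply: map_f; rewrite mem_enum.
have fE (i : 'I_n) : ((f i) : nat) = Num.truncn (t i * N%:R).
  rewrite ffunE inordK // ltnS truncn_le_nat.
  have : t i * N%:R <= N%:R by have := t1 i; nra.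
  rewrite -addn1 natrD; lra.
rewrite /G -sumrB.
apply: (le_lt_trans (ler_norm_sum _ _ _)).
apply: (le_lt_trans _ NMe); rewrite /M mulr_suml; apply: ler_sum => i _.
rewrite -scalerBl normrZ [X in _ <= X]mulrC; apply: ler_wpM2r => //.
have := truncn_itv (mulr_ge0 (t0 i) (ler0n _ N)); rewrite -fE => /andP [h1 h2].
have -> : t i - (f i)%:R / N%:R = (t i * N%:R - (f i)%:R) / N%:R.
  by field; rewrite gt_eqF.
rewrite normrM normfV (gtr0_norm N0).
have u0 : 0 < N%:R^-1 :> R by rewrite invr_gt0.
have : `|t i * N%:R - (f i)%:R| <= 1.
  rewrite ger0_norm; [lra | lra].
nra.
Qed.

End Aux3.
Section Aux4.
Context {R : realType} {X : completeNormedModType R}.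

Lemma net_of (A : set X) : compact (closure A) -> forall e : R,
  exists s : seq X, 0 < e -> forall z, A z -> exists2 c, c \in s & `|z - c| < e.
Proof.
move=> cA e; have [e0|e0] := ltP 0 e; last by exists [::].
move: cA; rewrite compact_cover => /(_ X setT (fun c => ball c e)).
case.
- by move=> c _; exact: ball_open.
- by move=> z _; exists z => //; exact: ballxx.
move=> D _ HD; exists (finmap.enum_fset D) => _ z Az.
have [c Dc bc] := HD z (subset_closure Az).
by exists c => //; rewrite distrC -ballN.
Qed.

Lemma mazur (A : set X) : compact (closure A) -> compact (clconv A).
Proof.
move=> cA; have [f hf] := choice (net_of _ cA).
pose W := [set z | forall e d : R, 0 < e -> 0 < d ->
  exists2 p, hull (f e) p & `|z - p| <= e + d].
have AW : A `<=` W.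
  move=> z Az e d e0 d0; have [c cf zc] := hf e e0 z Az.
  by exists c; [exact: hull_mem | lra].
have vW : convex_subset W.
  move=> x y t Wx Wy t0 t1 e d e0 d0.
  have [p1 h1 n1] := Wx e d e0 d0; have [p2 h2 n2] := Wy e d e0 d0.
  exists (t *: p1 + (1 - t) *: p2); first exact: hull_convex.
  have -> : t *: x + (1 - t) *: y - (t *: p1 + (1 - t) *: p2) =
            t *: (x - p1) + (1 - t) *: (y - p2).
    by rewrite !scalerBr addrACA opprD.
  apply: (le_trans (ler_normD _ _)); rewrite !normrZ !ger0_norm; [|lra|lra].
  nra.
have cW : closed W.
  move=> z Hz e d e0 d0.
  have [w [Ww zw]] := Hz _ (nbhsx_ballx z (d / 2) ltac:(lra)).
  have [p hp wp] := Ww e (d / 2) e0 ltac:(lra).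
  exists p => //; move: zw; rewrite ballN => zw.
  have := ler_normD (z - w) (w - p); rewrite addrA subrK; lra.
have compW : compact W.
  apply: tb_compact => // eta eta0.
  have e4 : 0 < eta / 4 by lra.
  have [g hg] := hull_tb (f (eta / 4)) (eta / 4) e4.
  exists g => z Wz.
  have [p hp zp] := Wz (eta / 4) (eta / 4) ltac:(lra) ltac:(lra).
  have [c cg pc] := hg p hp.
  exists c => //; rewrite ballN.
  have := ler_normD (z - p) (p - c); rewrite addrA subrK distrC; lra.
apply: (subclosed_compact (clconv_closed A) compW).
exact: clconv_sub.
Qed.

End Aux4.
Section Main.
Context {R : realType} {X : completeNormedModType R}.
Variables (U : set X) (T : X -> X).

Let C x e := clconv (T @` (cball x e `&` closure U)).

Let C_mono x y (d e : R) : `|y - x| + d <= e -> C y d `<=` C x e.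
Proof.
move=> h; apply: clconv_mono => _ [w [bw Uw] <-]; exists w => //; split => //.
rewrite /cball /= in bw *.
have := ler_normD (w - y) (y - x); rewrite addrA subrK; lra.
Qed.

Let env_sub x e : 0 < e -> envelope U T x `<=` C x e.
Proof. by move=> e0 z /(_ e e0). Qed.

Let env_closed x : closed (envelope U T x).
Proof.
move=> z Hz e e0; apply: (clconv_closed _).
exact: (closureS (env_sub x e e0) Hz).
Qed.

Let C_compact x e : (forall B : set X, B `<=` closure U -> bounded_subset B ->
       rel_compact (T @` B)) -> compact (C x e).
Proof.
move=> Hb; apply: mazur; apply: Hb; first by move=> z [].
exists (`|x| + e) => z [bz _]; rewrite /cball /= in bz.
have := ler_normD (z - x) x; rewrite subrK; lra.
Qed.

Lemma main_part1 : (forall B : set X, B `<=` closure U -> bounded_subset B ->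
       rel_compact (T @` B)) ->
     (forall x, closure U x -> compact (envelope U T x)) /\
     usc_on (closure U) (envelope U T).
Proof.
move=> Hb; split.
  move=> x _; apply: (subclosed_compact (env_closed x) (C_compact x 1 Hb)).
  exact: env_sub.
move=> x Dx V oV envV.
have [e e0 CV] : exists2 e : R, 0 < e & C x e `<=` V.
  apply: contrapT => Hn.
  pose B e := C x e `&` ~` V.
  have Bne : forall e, 0 < e -> B e !=set0.
    move=> e e0; apply: contrapT => nB; apply: Hn; exists e => // z Cz.
    apply: contrapT => nVz; apply: nB; by exists z.
  pose F := filter_from [set e : R | 0 < e] B.
  have FF : Filter F.
    apply: filter_from_filter; first by exists 1 => /=.
    move=> i j i0 j0; exists (Order.min i j); first by rewrite /= lt_min i0 j0.
    move=> z [Cz nVz]; split; split => //.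
    - apply: (C_mono x x (Order.min i j) i) => //; rewrite subrr normr0 add0r.
      by rewrite ge_min lexx.
    - apply: (C_mono x x (Order.min i j) j) => //; rewrite subrr normr0 add0r.
      by rewrite ge_min lexx orbT.
  have PF : ProperFilter F by apply: filter_from_proper.
  have FC1 : F (C x 1) by exists 1 => //= z [].
  have [p [_ clp]] := C_compact x 1 Hb F PF FC1.
  rewrite clusterE in clp.
  have Bp : forall e, 0 < e -> B e p.
    move=> e e0; have cB : closed (B e).
      by apply: closedI; [exact: clconv_closed | exact: open_closedC].
    by apply: cB; apply: clp; exists e.
  have : envelope U T x p by move=> e e0; case: (Bp e e0).
  by move/envV; case: (Bp 1 ltr01).
exists (e / 2); first lra.
move=> y Dy yx z /(env_sub y (e / 2) ltac:(lra)) Cz; apply: CV.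
by apply: (C_mono x y (e / 2) e) => //; lra.
Qed.

Lemma main_part2 : rel_compact (T @` closure U) ->
     rel_compact (\bigcup_(x in closure U) envelope U T x).
Proof.
move=> rc; have cK := mazur _ rc.
apply: (subclosed_compact (@closed_closure _ _) cK).
move=> z Hz; apply: (clconv_closed _).
apply: (closureS _ Hz) => w [x _ /(env_sub x 1 ltr01)].
by apply: clconv_mono => _ [v [_ Uv] <-]; exists v.
Qed.

End Main.

Theorem proposition1 (R : realType) (X : completeNormedModType R)
  (K U : set X) (T : X -> X) :
  is_cone K -> rel_open_in K U ->
  (forall x, closure U x -> K (T x)) ->
  ((forall B : set X, B `<=` closure U -> bounded_subset B ->
       rel_compact (T @` B)) ->
     (forall x, closure U x -> compact (envelope U T x)) /\
     usc_on (closure U) (envelope U T)) /\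
  (rel_compact (T @` closure U) ->
     rel_compact (\bigcup_(x in closure U) envelope U T x)).
Proof.
move=> _ _ _; split; [exact: main_part1 | exact: main_part2].
Qed.
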